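(* Let $\lambda>0$ and let $\lambda_1,\dots,\lambda_M>0$. (i) For each $p\ge 0$, the equation $$t=\sum_{\rho=1}^M\Big(\frac{1}{\lambda_\rho}+\frac{p}{\lambda+t}\Big)^{-1}$$ has a unique solution $t(p)\in(0,\infty)$, and $p\mapsto t(p)$ is differentiable. (ii) With $\gamma(p)=\sum_\rho\big(\frac{1}{\lambda_\rho}+\frac{p}{\lambda+t(p)}\big)^{-2}$, one has $(\lambda+t(p))^2>p\,\gamma(p)$ and $$t'(p)=-\frac{(\lambda+t)\,\gamma}{(\lambda+t)^2-p\gamma}<0.$$ (iii) Let $c_\rho>0$ and define $$E_\rho(p)=\frac{c_\rho}{\lambda_\rho}\Big(\frac{1}{\lambda_\rho}+\frac{p}{\lambda+t(p)}\Big)^{-2}\Big(1-\frac{p\gamma(p)}{(\lambda+t(p))^2}\Big)^{-1}.$$ If $\lambda_\gamma>\lambda_\rho$, then for all $p>0$, $$\frac{d}{dp}\log E_\rho(p)>\frac{d}{dp}\log E_\gamma(p).$$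
   Context: This concerns the theoretical mode-error learning curves of kernel ridge regression with ridge parameter $\lambda$ and kernel eigenvalues $\lambda_\rho$. In the application, $c_\rho=\langle\overline{w}_\rho^2\rangle$ is the second moment of the target's $\rho$-th feature coefficient. The index $\gamma$ in part (iii) is a mode label and should not be confused with the function $\gamma(p)$. *)

(* Defs.v *)
From Stdlib Require Import Reals.
Open Scope R_scope.

(* sumR M f = f 0 + f 1 + ... + f (M-1); modes are indexed 0..M-1. *)
Fixpoint sumR (M : nat) (f : nat -> R) : R :=
  match M with
  | O => 0
  | S m => sumR m f + f m
  end.

Definition Fsc (M : nat) (lam : R) (lams : nat -> R) (p t : R) : R :=
  sumR M (fun r => / (/ lams r + p / (lam + t))).

Definition Gam (M : nat) (lam : R) (lams : nat -> R) (p t : R) : R :=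
  sumR M (fun r => / (/ lams r + p / (lam + t)) ^ 2).

Definition tderiv (M : nat) (lam : R) (lams : nat -> R) (T : R -> R) (p : R) : R :=
  - ((lam + T p) * Gam M lam lams p (T p))
    / ((lam + T p) ^ 2 - p * Gam M lam lams p (T p)).

Definition Emode (M : nat) (lam : R) (lams c : nat -> R) (T : R -> R)
    (r : nat) (p : R) : R :=
  c r / lams r * / (/ lams r + p / (lam + T p)) ^ 2
  * / (1 - p * Gam M lam lams p (T p) / (lam + T p) ^ 2).

(* Main.v *)
Require Import Defs.
From Stdlib Require Import Reals Lra Lia.
From Coquelicot Require Import Coquelicot.
Open Scope R_scope.

Lemma sumR_ext M f g : (forall r, (r<M)%nat -> f r = g r) -> sumR M f = sumR M g.
Proof. induction M; simpl; intros H; [reflexivity|].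
rewrite IHM by (intros; apply H; lia). rewrite H by lia. reflexivity. Qed.

Lemma sumR_minus M f g : sumR M (fun r => f r - g r) = sumR M f - sumR M g.
Proof. induction M; simpl; [ring|rewrite IHM; ring]. Qed.

Lemma sumR_scal M c f : sumR M (fun r => c * f r) = c * sumR M f.
Proof. induction M; simpl; [ring|rewrite IHM; ring]. Qed.

Lemma sumR_le M f g : (forall r, (r<M)%nat -> f r <= g r) -> sumR M f <= sumR M g.
Proof. induction M; simpl; intros H; [lra|].
assert (sumR M f <= sumR M g) by (apply IHM; intros; apply H; lia).
assert (f M <= g M) by (apply H; lia). lra. Qed.

Lemma sumR_nonneg M f : (forall r, (r<M)%nat -> 0 <= f r) -> 0 <= sumR M f.
Proof. intros H. replace 0 with (sumR M (fun _ => 0)).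
apply sumR_le; auto. clear H; induction M; simpl; [ring|rewrite IHM; ring]. Qed.

Lemma sumR_pos M f : (1<=M)%nat -> (forall r, (r<M)%nat -> 0 < f r) -> 0 < sumR M f.
Proof. destruct M; [lia|]. intros _ H. simpl.
assert (0 <= sumR M f) by (apply sumR_nonneg; intros; left; apply H; lia).
assert (0 < f M) by (apply H; lia). lra. Qed.

Lemma lim_const c D x0 : limit1_in (fun _ => c) D c x0.
Proof. exact (limit_free (fun _ => c) D 0 x0). Qed.

Lemma sumR_limit M (f : nat -> R -> R) D (l : nat -> R) x0 :
  (forall r, (r<M)%nat -> limit1_in (f r) D (l r) x0) ->
  limit1_in (fun q => sumR M (fun r => f r q)) D (sumR M l) x0.
Proof. induction M; simpl; intros H. apply lim_const.
apply (limit_plus (fun q => sumR M (fun r => f r q)) (f M)).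
apply IHM; intros; apply H; lia. apply H; lia. Qed.

Lemma sumR_exd M (f : nat -> R -> R) p :
  (forall r, (r<M)%nat -> ex_derive (f r) p) ->
  ex_derive (fun q => sumR M (fun r => f r q)) p.
Proof. induction M; simpl; intros H. apply ex_derive_const.
apply (ex_derive_plus (fun q => sumR M (fun r => f r q)) (f M)).
apply IHM; intros; apply H; lia. apply H; lia. Qed.

Lemma limit_ext f g D l x0 : limit1_in f D l x0 -> (forall x, D x -> f x = g x) ->
  limit1_in g D l x0.
Proof. unfold limit1_in, limit_in. intros H E eps He.
destruct (H eps He) as [a [Ha Hb]]. exists a; split; auto.
intros x Hx. rewrite <- E by apply Hx. apply Hb; auto. Qed.

Lemma inv_term l x q : 0 < l -> 0 < x -> 0 <= q ->
  / (/ l + q / x) = x * / (/ l * x + q).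
Proof. intros. assert (0 <= q*l) by (apply Rmult_le_pos; lra).
field. repeat split; lra. Qed.

Lemma diff_term l x x' p q : 0 < l -> 0 < x -> 0 < x' -> 0 <= p -> 0 <= q ->
  / (/ l + q / x') - / (/ l + p / x) = (p * x' - q * x) * / ((/l * x' + q) * (/l * x + p)).
Proof. intros. rewrite !inv_term by auto.
assert (0 < /l) by (apply Rinv_0_lt_compat; lra).
assert (0 < /l * x) by (apply Rmult_lt_0_compat; lra).
assert (0 < /l * x') by (apply Rmult_lt_0_compat; lra).
field. assert (0 <= q*l) by (apply Rmult_le_pos; lra). assert (0 <= p*l) by (apply Rmult_le_pos; lra). repeat split; lra. Qed.

Lemma fix_sum M lam lams p t : 0 < lam -> (forall r, (r<M)%nat -> 0 < lams r) ->
  0 <= p -> 0 < t -> t = Fsc M lam lams p t ->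
  sumR M (fun r => / (/ lams r * (lam + t) + p)) = 1 - lam / (lam + t).
Proof. intros Hlam Hl Hp Ht E. unfold Fsc in E.
rewrite (sumR_ext _ _ (fun r => (lam+t) * / (/ lams r * (lam + t) + p))) in E
  by (intros; apply inv_term; auto; lra).
rewrite sumR_scal in E.
apply Rmult_eq_reg_l with (lam + t); [|lra].
rewrite <- E. field. lra. Qed.

Lemma key M lam lams p q t t' : 0 < lam -> (forall r, (r<M)%nat -> 0 < lams r) ->
  0 <= p -> 0 <= q -> 0 < t -> 0 < t' ->
  t = Fsc M lam lams p t -> t' = Fsc M lam lams q t' ->
  let S := sumR M (fun r => / ((/ lams r * (lam + t') + q) * (/ lams r * (lam + t) + p))) in
  (t' - t) * (1 - p * S) = - ((q - p) * (lam + t) * S) /\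
  lam / (lam + t') <= 1 - p * S /\
  S * (lam + t') <= sumR M (fun r => lams r / (/ lams r * (lam + t) + p)) /\
  0 <= S.
Proof. intros Hlam Hl Hp Hq Ht Ht' Ft Ft' S.
assert (Hpos : forall r, (r < M)%nat -> 0 < / lams r * (lam + t') + q /\ 0 < / lams r * (lam + t) + p).
{ intros r Hr. specialize (Hl r Hr). assert (0 < / lams r) by (apply Rinv_0_lt_compat; lra).
  split; [assert (0 < / lams r * (lam + t')) by (apply Rmult_lt_0_compat; lra)
         |assert (0 < / lams r * (lam + t)) by (apply Rmult_lt_0_compat; lra)]; lra. }
assert (E : t' - t = (p * (lam + t') - q * (lam + t)) * S).
{ rewrite Ft at 1. rewrite Ft' at 1. unfold Fsc. rewrite <- sumR_minus. unfold S.
  rewrite <- sumR_scal. apply sumR_ext. intros r Hr. apply diff_term; auto; lra. }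
assert (S0 : 0 <= S).
{ apply sumR_nonneg. intros r Hr. destruct (Hpos r Hr). left. apply Rinv_0_lt_compat.
  apply Rmult_lt_0_compat; lra. }
split; [|split; [|split]]; auto.
- transitivity ((p * (lam + t') - q * (lam + t)) * S - p * S * (t' - t)).
  + rewrite <- E. ring.
  + ring.
- pose proof (fix_sum M lam lams q t' Hlam Hl Hq Ht' Ft') as FS.
  assert (p * S <= sumR M (fun r => / (/ lams r * (lam + t') + q))).
  { unfold S. rewrite <- sumR_scal. apply sumR_le. intros r Hr. destruct (Hpos r Hr) as [A B].
    rewrite Rinv_mult.
    replace (p * (/ (/ lams r * (lam + t') + q) * / (/ lams r * (lam + t) + p)))
      with (/ (/ lams r * (lam + t') + q) * (p / (/ lams r * (lam + t) + p))) by (unfold Rdiv; ring).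
    rewrite <- (Rmult_1_r (/ (/ lams r * (lam + t') + q))) at 2.
    apply Rmult_le_compat_l. left; apply Rinv_0_lt_compat; lra.
    specialize (Hl r Hr).
    assert (0 < / lams r * (lam + t)) by (apply Rmult_lt_0_compat; [apply Rinv_0_lt_compat|]; lra).
    unfold Rdiv; apply Rmult_le_reg_r with (/ lams r * (lam + t) + p); [lra|].
    rewrite Rmult_assoc, Rinv_l, Rmult_1_r, Rmult_1_l; lra. }
  lra.
- unfold S. rewrite Rmult_comm, <- sumR_scal. apply sumR_le. intros r Hr.
  destruct (Hpos r Hr) as [A B]. specialize (Hl r Hr).
  rewrite Rinv_mult.
  replace ((lam + t') * (/ (/ lams r * (lam + t') + q) * / (/ lams r * (lam + t) + p)))
    with ((lam + t') / (/ lams r * (lam + t') + q) * / (/ lams r * (lam + t) + p)) by (unfold Rdiv; ring).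
  unfold Rdiv at 2. apply Rmult_le_compat_r. left; apply Rinv_0_lt_compat; lra.
  apply Rmult_le_reg_r with (/ lams r * (lam + t') + q); [lra|].
  unfold Rdiv. rewrite Rmult_assoc, Rinv_l by lra.
  assert (lams r * q >= 0) by (apply Rle_ge, Rmult_le_pos; lra).
  rewrite Rmult_plus_distr_l, <- Rmult_assoc, Rinv_r by lra. lra.
Qed.

Lemma term_pos l p t lam : 0 < l -> 0 < lam -> 0 <= p -> 0 <= t -> 0 < / (/ l + p / (lam + t)).
Proof. intros. apply Rinv_0_lt_compat.
assert (0 < /l) by (apply Rinv_0_lt_compat; lra).
assert (0 <= p / (lam + t)) by (apply Rdiv_le_0_compat; lra). lra. Qed.

Lemma term_le l p t lam : 0 < l -> 0 < lam -> 0 <= p -> 0 <= t -> / (/ l + p / (lam + t)) <= l.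
Proof. intros. assert (0 < /l) by (apply Rinv_0_lt_compat; lra).
assert (0 <= p / (lam + t)) by (apply Rdiv_le_0_compat; lra).
rewrite <- (Rinv_inv l) at 2. apply Rinv_le_contravar; lra. Qed.

Lemma exist_fix M lam lams p : (1<=M)%nat -> 0 < lam -> (forall r, (r<M)%nat -> 0 < lams r) ->
  0 <= p -> exists t, 0 < t /\ t = Fsc M lam lams p t.
Proof. intros HM Hlam Hl Hp.
assert (FP : forall t, 0 <= t -> 0 < Fsc M lam lams p t).
{ intros t Ht. apply sumR_pos; auto. intros; apply term_pos; auto. }
assert (FL : forall t, 0 <= t -> Fsc M lam lams p t <= sumR M lams).
{ intros t Ht. apply sumR_le. intros; apply term_le; auto. }
assert (L0 : 0 < sumR M lams) by (apply sumR_pos; auto).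
set (psi := fun u => u^2 - Fsc M lam lams p (u^2)).
assert (cont : continuity psi).
{ intros u. apply derivable_continuous_pt. apply ex_derive_Reals_0. unfold psi, Fsc.
  apply (ex_derive_minus (fun u => u^2)). auto_derive; trivial.
  apply (sumR_exd M (fun r q => / (/ lams r + p / (lam + q^2)))).
  intros r Hr. specialize (Hl r Hr). auto_derive.
  assert (0 <= u*u) by nra. assert (0 < /lams r) by (apply Rinv_0_lt_compat; lra).
  assert (0 <= p * / (lam + u * (u * 1))) by (apply Rmult_le_pos; [lra|left; apply Rinv_0_lt_compat; lra]).
  repeat split; lra. }
destruct (IVT psi 0 (sumR M lams + 1) cont) as [z [_ Hz]].
- lra.
- unfold psi. pose proof (FP (0^2) ltac:(simpl; lra)). simpl in *. lra.
- unfold psi. pose proof (FL ((sumR M lams + 1)^2) ltac:(apply pow2_ge_0)). nra.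
- exists (z^2). unfold psi in Hz. pose proof (FP (z^2) ltac:(apply pow2_ge_0)). split; lra.
Qed.

Definition Sf M lam lams (T : R -> R) p q :=
  sumR M (fun r => / ((/ lams r * (lam + T q) + q) * (/ lams r * (lam + T p) + p))).

Definition Bf M lam lams (T : R -> R) p :=
  sumR M (fun r => lams r / (/ lams r * (lam + T p) + p)).

Lemma Bf_nonneg M lam lams T p : 0 < lam -> (forall r, (r<M)%nat -> 0 < lams r) -> 0 <= p -> 0 < T p ->
  0 <= Bf M lam lams T p.
Proof. intros. apply sumR_nonneg. intros r Hr. specialize (H0 r Hr).
assert (0 < / lams r) by (apply Rinv_0_lt_compat; lra).
assert (0 < / lams r * (lam + T p)) by (apply Rmult_lt_0_compat; lra).
left; apply Rdiv_lt_0_compat; lra. Qed.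

Lemma T_lip M lam lams (T : R -> R) p q : 0 < lam -> (forall r, (r<M)%nat -> 0 < lams r) ->
  (forall p, 0 <= p -> 0 < T p /\ T p = Fsc M lam lams p (T p)) -> 0 <= p -> 0 <= q ->
  Rabs (T q - T p) <= Rabs (q - p) * ((lam + T p) * Bf M lam lams T p / lam).
Proof. intros Hlam Hl HT Hp Hq.
destruct (HT p Hp) as [Tp Fp]. destruct (HT q Hq) as [Tq Fq].
destruct (key M lam lams p q (T p) (T q) Hlam Hl Hp Hq Tp Tq Fp Fq) as [E [Bd [SB S0]]].
fold (Sf M lam lams T p q) in E, Bd, SB, S0. fold (Bf M lam lams T p) in SB.
set (S := Sf M lam lams T p q) in *. set (B := Bf M lam lams T p) in *.
assert (0 < lam / (lam + T q)) by (apply Rdiv_lt_0_compat; lra).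
assert (H1 : Rabs (T q - T p) * (1 - p * S) = Rabs (q - p) * (lam + T p) * S).
{ rewrite <- (Rabs_right (1 - p * S)) by lra. rewrite <- Rabs_mult, E, Rabs_Ropp, !Rabs_mult.
  rewrite (Rabs_right (lam + T p)) by lra. rewrite (Rabs_right S) by lra. reflexivity. }
set (A := Rabs (T q - T p)) in *. set (P := Rabs (q - p)) in *.
assert (0 <= A) by apply Rabs_pos. assert (0 <= P) by apply Rabs_pos.
apply Rmult_le_reg_r with lam; [lra|].
replace (P * ((lam + T p) * B / lam) * lam) with (P * (lam + T p) * B) by (field; lra).
replace (A * lam) with (A * (lam / (lam + T q)) * (lam + T q)) by (field; lra).
apply Rle_trans with (A * (1 - p * S) * (lam + T q)).
{ apply Rmult_le_compat_r; [lra|]. apply Rmult_le_compat_l; lra. }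
rewrite H1. rewrite Rmult_assoc. apply Rmult_le_compat_l.
{ apply Rmult_le_pos; lra. } lra.
Qed.

Definition Dom (p : R) := fun q => 0 <= q /\ q <> p.

Lemma T_lim M lam lams (T : R -> R) p : 0 < lam -> (forall r, (r<M)%nat -> 0 < lams r) ->
  (forall p, 0 <= p -> 0 < T p /\ T p = Fsc M lam lams p (T p)) -> 0 <= p ->
  limit1_in T (Dom p) (T p) p.
Proof. intros Hlam Hl HT Hp.
pose proof (Bf_nonneg M lam lams T p Hlam Hl Hp (proj1 (HT p Hp))).
set (K := (lam + T p) * Bf M lam lams T p / lam).
assert (K0 : 0 <= K).
{ unfold K. apply Rmult_le_pos; [apply Rmult_le_pos|left; apply Rinv_0_lt_compat]; try lra.
  pose proof (proj1 (HT p Hp)); lra. }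
unfold limit1_in, limit_in; simpl; unfold R_dist. intros eps He.
exists (eps / (K + 1)). split. apply Rdiv_lt_0_compat; lra.
intros x [[Hx _] Hd]. eapply Rle_lt_trans. apply (T_lip M lam lams T p x); auto.
fold K. assert (0 <= Rabs (x - p)) by apply Rabs_pos.
apply Rle_lt_trans with (Rabs (x - p) * (K + 1)). apply Rmult_le_compat_l; lra.
apply Rmult_lt_reg_r with (/ (K + 1)). apply Rinv_0_lt_compat; lra.
rewrite Rmult_assoc, Rinv_r, Rmult_1_r by lra. exact Hd.
Qed.

Lemma S_lim M lam lams (T : R -> R) p : 0 < lam -> (forall r, (r<M)%nat -> 0 < lams r) ->
  (forall p, 0 <= p -> 0 < T p /\ T p = Fsc M lam lams p (T p)) -> 0 <= p ->
  limit1_in (Sf M lam lams T p) (Dom p) (Sf M lam lams T p p) p.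
Proof. intros Hlam Hl HT Hp. pose proof (T_lim M lam lams T p Hlam Hl HT Hp) as TL.
pose proof (proj1 (HT p Hp)) as Tp.
unfold Sf. apply (sumR_limit M (fun r q => / ((/ lams r * (lam + T q) + q) * (/ lams r * (lam + T p) + p)))).
intros r Hr. specialize (Hl r Hr).
assert (0 < / lams r) by (apply Rinv_0_lt_compat; lra).
assert (0 < / lams r * (lam + T p)) by (apply Rmult_lt_0_compat; lra).
apply (limit_inv (fun q => (/ lams r * (lam + T q) + q) * (/ lams r * (lam + T p) + p))).
2:{ apply Rgt_not_eq, Rmult_lt_0_compat; lra. }
apply (limit_mul (fun q => / lams r * (lam + T q) + q) (fun _ => / lams r * (lam + T p) + p)).
2: apply lim_const.
apply (limit_plus (fun q => / lams r * (lam + T q)) (fun q => q)). 2: apply lim_x.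
apply (limit_mul (fun _ => / lams r) (fun q => lam + T q)). apply lim_const.
apply (limit_plus (fun _ => lam) T). apply lim_const. exact TL.
Qed.

Lemma Q_eq M lam lams (T : R -> R) p q : 0 < lam -> (forall r, (r<M)%nat -> 0 < lams r) ->
  (forall p, 0 <= p -> 0 < T p /\ T p = Fsc M lam lams p (T p)) -> 0 <= p -> Dom p q ->
  (T q - T p) / (q - p) = - ((lam + T p) * Sf M lam lams T p q) * / (1 - p * Sf M lam lams T p q).
Proof. intros Hlam Hl HT Hp [Hq Hne].
destruct (HT p Hp) as [Tp Fp]. destruct (HT q Hq) as [Tq Fq].
destruct (key M lam lams p q (T p) (T q) Hlam Hl Hp Hq Tp Tq Fp Fq) as [E [Bd [SB S0]]].
fold (Sf M lam lams T p q) in E, Bd, SB, S0.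
set (S := Sf M lam lams T p q) in *.
assert (0 < lam / (lam + T q)) by (apply Rdiv_lt_0_compat; lra).
assert (q - p <> 0) by lra.
assert (E2 : T q - T p = - ((q - p) * (lam + T p) * S) / (1 - p * S)).
{ rewrite <- E. field. lra. }
rewrite E2. field. split; lra.
Qed.

Lemma Gam_eq M lam lams p t : 0 < lam -> (forall r, (r<M)%nat -> 0 < lams r) -> 0 <= p -> 0 < t ->
  Gam M lam lams p t = (lam + t)^2 * sumR M (fun r => / ((/ lams r * (lam + t) + p) * (/ lams r * (lam + t) + p))).
Proof. intros. unfold Gam. rewrite <- sumR_scal. apply sumR_ext. intros r Hr.
specialize (H0 r Hr). assert (0 <= p * lams r) by (apply Rmult_le_pos; lra).
field. repeat split; lra.
Qed.

Lemma pS_bound M lam lams (T : R -> R) p : 0 < lam -> (forall r, (r<M)%nat -> 0 < lams r) ->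
  (forall p, 0 <= p -> 0 < T p /\ T p = Fsc M lam lams p (T p)) -> 0 <= p ->
  lam / (lam + T p) <= 1 - p * Sf M lam lams T p p /\ 0 <= Sf M lam lams T p p.
Proof. intros Hlam Hl HT Hp. destruct (HT p Hp) as [Tp Fp].
destruct (key M lam lams p p (T p) (T p) Hlam Hl Hp Hp Tp Tp Fp Fp) as [E [Bd [SB S0]]].
split; assumption. Qed.

Lemma tderiv_eq M lam lams (T : R -> R) p : 0 < lam -> (forall r, (r<M)%nat -> 0 < lams r) ->
  (forall p, 0 <= p -> 0 < T p /\ T p = Fsc M lam lams p (T p)) -> 0 <= p ->
  tderiv M lam lams T p = - ((lam + T p) * Sf M lam lams T p p) * / (1 - p * Sf M lam lams T p p).
Proof. intros Hlam Hl HT Hp. pose proof (proj1 (HT p Hp)) as Tp.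
destruct (pS_bound M lam lams T p Hlam Hl HT Hp) as [Bd S0].
assert (0 < lam / (lam + T p)) by (apply Rdiv_lt_0_compat; lra).
unfold tderiv. rewrite (Gam_eq M lam lams p (T p)) by auto. fold (Sf M lam lams T p p).
set (S := Sf M lam lams T p p) in *.
replace ((lam + T p) ^ 2 - p * ((lam + T p) ^ 2 * S)) with ((lam + T p)^2 * (1 - p * S)) by ring.
field. split; lra. Qed.

Lemma deriv_lim M lam lams (T : R -> R) p : 0 < lam -> (forall r, (r<M)%nat -> 0 < lams r) ->
  (forall p, 0 <= p -> 0 < T p /\ T p = Fsc M lam lams p (T p)) -> 0 <= p ->
  limit1_in (fun q => (T q - T p) / (q - p)) (Dom p) (tderiv M lam lams T p) p.
Proof. intros Hlam Hl HT Hp. pose proof (proj1 (HT p Hp)) as Tp.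
destruct (pS_bound M lam lams T p Hlam Hl HT Hp) as [Bd S0].
assert (0 < lam / (lam + T p)) by (apply Rdiv_lt_0_compat; lra).
pose proof (S_lim M lam lams T p Hlam Hl HT Hp) as SL.
rewrite (tderiv_eq M lam lams T p) by auto.
apply limit_ext with (f := fun q => - ((lam + T p) * Sf M lam lams T p q) * / (1 - p * Sf M lam lams T p q)).
2:{ intros x Hx. symmetry. apply Q_eq; auto. }
apply (limit_mul (fun q => - ((lam + T p) * Sf M lam lams T p q)) (fun q => / (1 - p * Sf M lam lams T p q))).
- apply (limit_Ropp (fun q => (lam + T p) * Sf M lam lams T p q)).
  apply (limit_mul (fun _ => lam + T p) (Sf M lam lams T p)). apply lim_const. exact SL.
- apply (limit_inv (fun q => 1 - p * Sf M lam lams T p q)). 2: lra.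
  apply (limit_minus (fun _ => 1) (fun q => p * Sf M lam lams T p q)). apply lim_const.
  apply (limit_mul (fun _ => p) (Sf M lam lams T p)). apply lim_const. exact SL.
Qed.

Lemma ln_mode_deriv (T w : R -> R) lam l cr p dT : 0 < lam -> 0 < l -> 0 < cr -> 0 < p -> 0 < T p ->
  is_derive T p dT -> ex_derive w p -> 0 < w p ->
  is_derive (fun q => ln (cr / l * / (/ l + q / (lam + T q)) ^ 2 * w q)) p
    (-2 * (/ (lam + T p) - p * dT / (lam + T p) ^ 2) / (/ l + p / (lam + T p)) + Derive w p / w p).
Proof. intros Hlam Hl Hc Hp HTp HdT Hw Hwp.
assert (0 < / l) by (apply Rinv_0_lt_compat; lra).
assert (0 < p / (lam + T p)) by (apply Rdiv_lt_0_compat; lra).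
assert (0 < p * / (lam + T p)) by exact H0.
assert (0 < cr / l) by (apply Rdiv_lt_0_compat; lra).
assert (0 < / (/ l + p * / (lam + T p)) ^ 2) by (apply Rinv_0_lt_compat, pow_lt; lra).
assert (Ha : 0 < / l + p * / (lam + T p)) by lra.
auto_derive.
- repeat split; try lra. exists dT; exact HdT.
  apply Rgt_not_eq, Rmult_lt_0_compat; lra.
  exact Hw.
  apply Rmult_lt_0_compat; [apply Rmult_lt_0_compat|]; auto.
- replace (Derive (fun x : R => T x) p) with dT by (symmetry; apply is_derive_unique; exact HdT).
  change (Derive (fun x : R => w x) p) with (Derive w p).
  assert (0 <= p * l) by (apply Rmult_le_pos; lra).
  field. repeat split; lra.
Qed.

Theorem mainTheorem4 (M : nat) (lam : R) (lams c : nat -> R)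
  (HM : (1 <= M)%nat) (Hlam : 0 < lam)
  (Hlams : forall r, (r < M)%nat -> 0 < lams r)
  (Hc : forall r, (r < M)%nat -> 0 < c r) :
  (forall p, 0 <= p -> exists! t, 0 < t /\ t = Fsc M lam lams p t) /\
  (forall T : R -> R,
     (forall p, 0 <= p -> 0 < T p /\ T p = Fsc M lam lams p (T p)) ->
     (forall p, 0 < p -> derivable_pt_lim T p (tderiv M lam lams T p)) /\
     limit1_in (fun h => (T h - T 0) / h) (fun h => 0 < h)
               (tderiv M lam lams T 0) 0 /\
     (forall p, 0 <= p ->
        p * Gam M lam lams p (T p) < (lam + T p) ^ 2) /\
     (forall p, 0 <= p -> tderiv M lam lams T p < 0) /\
     (forall r g, (r < M)%nat -> (g < M)%nat -> lams r < lams g ->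
        forall p, 0 < p ->
          exists dr dg,
            derivable_pt_lim (fun q => ln (Emode M lam lams c T r q)) p dr /\
            derivable_pt_lim (fun q => ln (Emode M lam lams c T g q)) p dg /\
            dg < dr)).
Proof.
split.
{ intros p Hp. destruct (exist_fix M lam lams p HM Hlam Hlams Hp) as [t [Ht Ft]].
  exists t. split; [split; auto|]. intros t' [Ht' Ft'].
  destruct (key M lam lams p p t t' Hlam Hlams Hp Hp Ht Ht' Ft Ft') as [E [Bd [SB S0]]].
  set (S := sumR M _) in *.
  assert (0 < lam / (lam + t')) by (apply Rdiv_lt_0_compat; lra).
  replace (- ((p - p) * (lam + t) * S)) with 0 in E by ring.
  destruct (Rmult_integral _ _ E); lra. }
intros T HT.
assert (Hder : forall p, 0 < p -> derivable_pt_lim T p (tderiv M lam lams T p)).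
{ intros p Hp. pose proof (deriv_lim M lam lams T p Hlam Hlams HT ltac:(lra)) as DL.
  unfold limit1_in, limit_in in DL; simpl in DL; unfold R_dist in DL.
  intros eps He. destruct (DL eps He) as [alp [Ha Hb]].
  assert (Hm : 0 < Rmin alp p) by (apply Rmin_pos; lra).
  exists (mkposreal _ Hm). intros h Hh Hlt. simpl in Hlt.
  assert (Rabs h < alp) by (eapply Rlt_le_trans; [exact Hlt| apply Rmin_l]).
  assert (Rabs h < p) by (eapply Rlt_le_trans; [exact Hlt| apply Rmin_r]).
  destruct (Rabs_def2 _ _ H0).
  specialize (Hb (p + h)).
  replace (p + h - p) with h in Hb by ring.
  apply Hb. split; [split|]; auto; lra. }
assert (HGam : forall p, 0 <= p -> p * Gam M lam lams p (T p) < (lam + T p) ^ 2).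
{ intros p Hp. pose proof (proj1 (HT p Hp)) as Tp.
  destruct (pS_bound M lam lams T p Hlam Hlams HT Hp) as [Bd S0].
  assert (0 < lam / (lam + T p)) by (apply Rdiv_lt_0_compat; lra).
  rewrite (Gam_eq M lam lams p (T p)) by auto. fold (Sf M lam lams T p p).
  assert (0 < (lam + T p)^2) by (apply pow_lt; lra).
  replace (p * ((lam + T p) ^ 2 * Sf M lam lams T p p)) with
    ((lam + T p) ^ 2 * (p * Sf M lam lams T p p)) by ring.
  rewrite <- (Rmult_1_r ((lam + T p)^2)) at 2. apply Rmult_lt_compat_l; lra. }
assert (Hneg : forall p, 0 <= p -> tderiv M lam lams T p < 0).
{ intros p Hp. pose proof (proj1 (HT p Hp)) as Tp.
  destruct (pS_bound M lam lams T p Hlam Hlams HT Hp) as [Bd S0].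
  assert (0 < lam / (lam + T p)) by (apply Rdiv_lt_0_compat; lra).
  assert (Spos : 0 < Sf M lam lams T p p).
  { apply sumR_pos; auto. intros r Hr. specialize (Hlams r Hr).
    assert (0 < / lams r) by (apply Rinv_0_lt_compat; lra).
    assert (0 < / lams r * (lam + T p)) by (apply Rmult_lt_0_compat; lra).
    apply Rinv_0_lt_compat, Rmult_lt_0_compat; lra. }
  rewrite tderiv_eq by auto.
  assert (0 < / (1 - p * Sf M lam lams T p p)) by (apply Rinv_0_lt_compat; lra).
  assert (0 < (lam + T p) * Sf M lam lams T p p) by (apply Rmult_lt_0_compat; lra).
  nra. }
split; [exact Hder|]. split.
{ pose proof (deriv_lim M lam lams T 0 Hlam Hlams HT (Rle_refl 0)) as DL.
  unfold limit1_in, limit_in in *; simpl in *; unfold R_dist in *.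
  intros eps He. destruct (DL eps He) as [alp [Ha Hb]]. exists alp; split; auto.
  intros x [Hx Hd]. specialize (Hb x). rewrite Rminus_0_r in Hb. apply Hb.
  split; [split; lra|]. rewrite Rminus_0_r in *. exact Hd. }
split; [exact HGam|]. split; [exact Hneg|].
intros r g Hr Hg Hrg p Hp.
pose proof (proj1 (HT p (Rlt_le _ _ Hp))) as Tp.
assert (HdT : is_derive T p (tderiv M lam lams T p)) by (apply is_derive_Reals; auto).
assert (exT : ex_derive T p) by (exists (tderiv M lam lams T p); exact HdT).
set (w := fun q => / (1 - q * Gam M lam lams q (T q) / (lam + T q) ^ 2)).
assert (exG : ex_derive (fun q => Gam M lam lams q (T q)) p).
{ unfold Gam. apply (sumR_exd M (fun r q => / (/ lams r + q / (lam + T q)) ^ 2)).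
  intros k Hk. specialize (Hlams k Hk).
  assert (0 < / lams k) by (apply Rinv_0_lt_compat; lra).
  assert (0 < p * / (lam + T p)) by (apply Rmult_lt_0_compat; [lra|apply Rinv_0_lt_compat; lra]).
  auto_derive. repeat split; auto; try lra.
  apply Rgt_not_eq, Rmult_lt_0_compat; lra. }
pose proof (HGam p (Rlt_le _ _ Hp)) as Gp.
assert (Hx2 : 0 < (lam + T p)^2) by (apply pow_lt; lra).
assert (W1 : p * Gam M lam lams p (T p) / (lam + T p) ^ 2 < 1).
{ apply Rmult_lt_reg_r with ((lam + T p)^2); auto. unfold Rdiv.
  rewrite Rmult_assoc, Rinv_l, Rmult_1_r, Rmult_1_l by lra. exact Gp. }
assert (wpos : 0 < w p) by (unfold w; apply Rinv_0_lt_compat; lra).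
assert (exw : ex_derive w p).
{ unfold w. set (G := fun q => Gam M lam lams q (T q)) in exG.
  change (ex_derive (fun q => / (1 - q * G q / (lam + T q) ^ 2)) p).
  auto_derive. repeat split; auto; try lra.
  change (p * G p * / ((lam + T p) * ((lam + T p) * 1))) with (p * G p / (lam + T p) ^ 2).
  unfold G. lra. }
pose proof (Hneg p (Rlt_le _ _ Hp)) as dneg.
set (dT := tderiv M lam lams T p) in *.
set (ds := / (lam + T p) - p * dT / (lam + T p) ^ 2).
assert (dsp : 0 < ds).
{ unfold ds. assert (0 < / (lam + T p)) by (apply Rinv_0_lt_compat; lra).
  assert (0 < / (lam + T p)^2) by (apply Rinv_0_lt_compat; lra).
  unfold Rdiv. assert (p * dT < 0) by nra. nra. }
exists (-2 * ds / (/ lams r + p / (lam + T p)) + Derive w p / w p).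
exists (-2 * ds / (/ lams g + p / (lam + T p)) + Derive w p / w p).
split; [|split].
- apply is_derive_Reals.
  exact (ln_mode_deriv T w lam (lams r) (c r) p dT Hlam (Hlams r Hr) (Hc r Hr) Hp Tp HdT exw wpos).
- apply is_derive_Reals.
  exact (ln_mode_deriv T w lam (lams g) (c g) p dT Hlam (Hlams g Hg) (Hc g Hg) Hp Tp HdT exw wpos).
- assert (0 < p / (lam + T p)) by (apply Rdiv_lt_0_compat; lra).
  pose proof (Hlams r Hr). pose proof (Hlams g Hg).
  assert (/ lams g < / lams r) by (apply Rinv_lt_contravar; [apply Rmult_lt_0_compat|]; lra).
  assert (0 < / lams g) by (apply Rinv_0_lt_compat; lra).
  assert (/ (/ lams r + p / (lam + T p)) < / (/ lams g + p / (lam + T p)))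
    by (apply Rinv_lt_contravar; [apply Rmult_lt_0_compat|]; lra).
  unfold Rdiv at 1 3. nra.
Qed.
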